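(* Let $d,n\ge 1$, let $\boldsymbol{a}_1,\ldots,\boldsymbol{a}_n\in\mathbf{R}^d$, let $w_1,\ldots,w_n>0$, fix $\varepsilon>0$ and $0<p\le 2$. Define $\Phi(\boldsymbol{x})=\sum_{j=1}^n w_j\,(\lVert\boldsymbol{x}-\boldsymbol{a}_j\rVert^2+\varepsilon)^{p/2}$ with gradient $\Phi'(\boldsymbol{x})=p\sum_j w_j(\lVert\boldsymbol{x}-\boldsymbol{a}_j\rVert^2+\varepsilon)^{p/2-1}(\boldsymbol{x}-\boldsymbol{a}_j)$. For a point $\boldsymbol{x}^{(t)}\in\mathbf{R}^d$ let $\mu_j^{(t)}=w_j\,(\lVert\boldsymbol{x}^{(t)}-\boldsymbol{a}_j\rVert^2+\varepsilon)^{p/2-1}$, let $\boldsymbol{x}^{(t+1)}=\sum_j\mu_j^{(t)}\boldsymbol{a}_j/\sum_j\mu_j^{(t)}$, and define $$\Psi_t(\boldsymbol{x})=\Phi(\boldsymbol{x}^{(t)})+(\boldsymbol{x}-\boldsymbol{x}^{(t)})^T\Phi'(\boldsymbol{x}^{(t)})+\frac{p}{2}\Big(\sum_j\mu_j^{(t)}\Big)\lVert\boldsymbol{x}-\boldsymbol{x}^{(t)}\rVert^2.$$ Then (i) $\Phi(\boldsymbol{x})\le\Psi_t(\boldsymbol{x})$ for all $\boldsymbol{x}\in\mathbf{R}^d$; (ii) $\Phi(\boldsymbol{x}^{(t)})=\Psi_t(\boldsymbol{x}^{(t)})$; (iii) $\Psi_t$ has $\boldsymbol{x}^{(t+1)}$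 as its unique global minimizer.
   Context: $\lVert\cdot\rVert$ is the Euclidean norm on $\mathbf{R}^d$. *)

(* Defs.v *)
From HB Require Import structures.
From mathcomp Require Import all_boot all_order all_algebra.
From mathcomp Require Import all_classical all_reals all_analysis.
Set Implicit Arguments. Unset Strict Implicit. Unset Printing Implicit Defensive.
Import Order.TTheory GRing.Theory Num.Theory.
Local Open Scope ring_scope.

Section Defs.
Variables (R : realType) (d n : nat).

Definition dotp (u v : 'rV[R]_d) : R := \sum_(i < d) u 0 i * v 0 i.
Definition sqnorm (u : 'rV[R]_d) : R := dotp u u.

Variables (a : 'I_n -> 'rV[R]_d) (w : 'I_n -> R) (eps p : R).

Definition Phi (x : 'rV[R]_d) : R :=
  \sum_(j < n) w j * powR (sqnorm (x - a j) + eps) (p / 2).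

Definition Phi' (x : 'rV[R]_d) : 'rV[R]_d :=
  p *: \sum_(j < n) (w j * powR (sqnorm (x - a j) + eps) (p / 2 - 1)) *: (x - a j).

Definition mu (xt : 'rV[R]_d) (j : 'I_n) : R :=
  w j * powR (sqnorm (xt - a j) + eps) (p / 2 - 1).

Definition xnext (xt : 'rV[R]_d) : 'rV[R]_d :=
  (\sum_(j < n) mu xt j)^-1 *: \sum_(j < n) mu xt j *: a j.

Definition Psi (xt x : 'rV[R]_d) : R :=
  Phi xt + dotp (x - xt) (Phi' xt)
  + p / 2 * (\sum_(j < n) mu xt j) * sqnorm (x - xt).

End Defs.

(* Main.v *)
Require Import Defs.
From HB Require Import structures.
From mathcomp Require Import all_boot all_order all_algebra.
From mathcomp Require Import all_classical all_reals all_analysis.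
From mathcomp Require Import ring lra.
Import Order.TTheory GRing.Theory Num.Theory.
Local Open Scope ring_scope.

Lemma bern (R : realType) (u q : R) : 0 < u -> 0 < q -> q <= 1 ->
  powR u q <= q * u + (1 - q).
Proof.
move=> u0 q0 q1.
have [->|qlt1] := eqVneq q 1.
  by rewrite powRr1 ?(ltW u0)// mul1r subrr addr0.
have q1' : q < 1 by rewrite lt_neqAle qlt1 q1.
have qi0 : 0 < q^-1 by rewrite invr_gt0.
have qi1 : 0 < (1 - q)^-1 by rewrite invr_gt0 subr_gt0.
have := @conjugate_powR R (powR u q) 1 q^-1 (1 - q)^-1 (powR_ge0 _ _) ler01
  qi0 qi1.
rewrite !invrK mulr1 powR1 -powRrM mulfV ?gt_eqF// powRr1 ?(ltW u0)//.
rewrite mul1r [u * q]mulrC; apply.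
by rewrite addrC subrK.
Qed.

Lemma concR (R : realType) (s t q : R) : 0 < s -> 0 < t -> 0 < q -> q <= 1 ->
  powR s q <= powR t q + q * powR t (q - 1) * (s - t).
Proof.
move=> s0 t0 q0 q1.
have H := @bern R (s / t) q (divr_gt0 s0 t0) q0 q1.
have tq0 : 0 < powR t q by apply: powR_gt0.
have E1 : powR s q = powR (s / t) q * powR t q.
  by rewrite -powRM ?divfK ?gt_eqF// ltW// divr_gt0.
have E2 : powR t (q - 1) = powR t q / t.
  by rewrite powRB ?(gt_eqF t0) ?implybT// powRr1 // ltW.
rewrite E1 E2.
apply: le_trans (ler_wpM2r (ltW tq0) H) _.
rewrite le_eqVlt; apply/orP; left; apply/eqP.
field.
by rewrite gt_eqF.
Qed.
Section V.
Variables (R : realType) (d : nat).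
Implicit Types (u v x y : 'rV[R]_d).

Lemma dotpC u v : dotp u v = dotp v u.
Proof. by rewrite /dotp; apply: eq_bigr => i _; rewrite mulrC. Qed.

Lemma dotpZr u k v : dotp u (k *: v) = k * dotp u v.
Proof. by rewrite /dotp mulr_sumr; apply: eq_bigr => i _; rewrite mxE mulrCA. Qed.

Lemma dotp_sumr (n : nat) u (v : 'I_n -> 'rV[R]_d) :
  dotp u (\sum_(j < n) v j) = \sum_(j < n) dotp u (v j).
Proof.
rewrite /dotp; under eq_bigr => i _ do rewrite summxE mulr_sumr.
exact: exchange_big.
Qed.

Lemma dotp0l v : dotp 0 v = 0.
Proof. by rewrite /dotp big1 // => i _; rewrite mxE mul0r. Qed.

Lemma sqnorm_diff x xt b :
  sqnorm (x - b) = sqnorm (xt - b) + 2 * dotp (x - xt) (xt - b) + sqnorm (x - xt).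
Proof.
rewrite /sqnorm /dotp mulr_sumr -!big_split /=; apply: eq_bigr => i _.
rewrite !mxE; ring.
Qed.

Lemma sqnorm_ge0 u : 0 <= sqnorm u.
Proof. by rewrite /sqnorm /dotp sumr_ge0 // => i _; rewrite -expr2 sqr_ge0. Qed.

Lemma sqnorm_eq0 u : sqnorm u = 0 -> u = 0.
Proof.
move=> /eqP; rewrite /sqnorm /dotp psumr_eq0 => [/allP H|i _]; last by rewrite -expr2 sqr_ge0.
apply/rowP => i; rewrite mxE.
have := H i (mem_index_enum _); rewrite implyTb mulf_eq0 orbb.
by move/eqP.
Qed.
Lemma quad_id x xt xn : 2 * dotp (x - xt) (xt - xn) + sqnorm (x - xt)
   = sqnorm (x - xn) - sqnorm (xn - xt).
Proof.
rewrite /sqnorm /dotp mulr_sumr -sumrB -!big_split /=; apply: eq_bigr => i _.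
rewrite !mxE; ring.
Qed.
End V.

Theorem proposition2 (R : realType) (d n : nat) (a : 'I_n -> 'rV[R]_d)
  (w : 'I_n -> R) (eps p : R) (xt : 'rV[R]_d) :
  (0 < d)%N -> (0 < n)%N -> (forall j, 0 < w j) -> 0 < eps -> 0 < p -> p <= 2 ->
  [/\ (forall x, Phi a w eps p x <= Psi a w eps p xt x),
      Phi a w eps p xt = Psi a w eps p xt xt
    & (forall y, (forall x, Psi a w eps p xt y <= Psi a w eps p xt x)
                 <-> y = xnext a w eps p xt)].
Proof.
move=> d0 n0 w0 eps0 p0 p2.
set mu := mu a w eps p xt.
set S := \sum_(j < n) mu j.
have tj0 : forall (y : 'rV[R]_d) j, 0 < sqnorm (y - a j) + eps.
  by move=> y j; rewrite ltr_wpDl // sqnorm_ge0.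
have mu0 : forall j, 0 < mu j.
  by move=> j; rewrite /mu /Defs.mu mulr_gt0 // powR_gt0.
have S0 : 0 < S.
  rewrite /S (bigD1 (Ordinal n0)) //= ltr_wpDr // ?mu0 //.
  by rewrite sumr_ge0 // => j _; rewrite ltW.
have grad : Phi' a w eps p xt = (p * S) *: (xt - xnext a w eps p xt).
  rewrite /Phi' -/mu.
  have -> : \sum_(j < n) (w j * powR (sqnorm (xt - a j) + eps) (p / 2 - 1)) *: (xt - a j)
      = S *: xt - \sum_(j < n) mu j *: a j.
    by rewrite /S scaler_suml -sumrB; apply: eq_bigr => j _; rewrite scalerBr.
  rewrite /xnext -/mu -/S.
  apply/rowP => i; rewrite !mxE.
  field; by rewrite gt_eqF.
set xn := xnext a w eps p xt.
set c := p / 2 * S.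
have c0 : 0 < c by rewrite /c mulr_gt0 // divr_gt0.
have PsiE : forall x, Psi a w eps p xt x
   = Phi a w eps p xt - c * sqnorm (xn - xt) + c * sqnorm (x - xn).
  move=> x; rewrite /Psi grad dotpZr.
  transitivity (Phi a w eps p xt + c * (2 * dotp (x - xt) (xt - xn) + sqnorm (x - xt))).
    by rewrite /c /xn -/mu -/S; field.
  rewrite quad_id; ring.
split.
- move=> x.
  have -> : Psi a w eps p xt x = \sum_(j < n) (w j * powR (sqnorm (xt - a j) + eps) (p / 2)
       + p * (mu j * dotp (x - xt) (xt - a j)) + p / 2 * mu j * sqnorm (x - xt)).
    rewrite /Psi /Phi' dotpZr dotp_sumr -/mu -/S /Phi.
    rewrite /S -(mulrA (p / 2)) mulr_suml (mulr_sumr _ _ _ p) (mulr_sumr _ _ _ (p / 2)) -!big_split /=.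
    by apply: eq_bigr => j _; rewrite dotpZr /mu /Defs.mu; ring.
  rewrite /Phi; apply: ler_sum => j _.
  have H := @concR R (sqnorm (x - a j) + eps) (sqnorm (xt - a j) + eps) (p / 2)
     (tj0 x j) (tj0 xt j) (divr_gt0 p0 (ltr0Sn R 1)) ltac:(by rewrite ler_pdivrMr // mul1r).
  apply: le_trans (ler_wpM2l (ltW (w0 j)) H) _.
  rewrite le_eqVlt; apply/orP; left; apply/eqP.
  rewrite (@sqnorm_diff R d x xt (a j)) /mu /Defs.mu; by field.
- by rewrite /Psi subrr dotp0l /sqnorm dotp0l mulr0 !addr0.
- move=> y; split => [H|->].
    have := H xn; rewrite !PsiE subrr /sqnorm dotp0l mulr0 lerD2l.
    move=> H2.
    have : sqnorm (y - xn) = 0.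
      apply/eqP; rewrite eq_le sqnorm_ge0 andbT.
      by rewrite -(ler_pM2l c0) mulr0.
    by move/sqnorm_eq0/eqP; rewrite subr_eq0 => /eqP.
  move=> x; rewrite !PsiE subrr /sqnorm dotp0l mulr0 lerD2l.
  by rewrite mulr_ge0 ?(ltW c0) // sqnorm_ge0.
Qed.
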